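(* Let $v=v_0v_1\cdots$ be an aperiodic infinite word over $\{0,1\}$ with $h(\ell)$ the number of $1$'s among its first $\ell$ digits, and suppose $\liminf_{\ell\to\infty}h(\ell)/\ell>\ln2/\ln3$. Then the set $\{\Phi_{\mathbb{R}}(v_kv_{k+1}\cdots):k\ge0\}$ (the orbit of $\Phi_{\mathbb{R}}(v)$) is an infinite subset of $\mathbb{R}$ having at least one accumulation point in $\mathbb{R}$.
   Context: For an infinite $0$-$1$ word $w$ with $1$'s at positions $d_0<d_1<\cdots$, $\Phi_{\mathbb{R}}(w)$ is the real sum $-\sum_{i\ge0}2^{d_i}/3^{i+1}$, said to exist if the series converges (under the hypothesis, all $\Phi_{\mathbb{R}}(v_kv_{k+1}\cdots)$ exist). Aperiodic means not eventually periodic. *)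

(* Defs.v *)
From mathcomp Require Import all_boot all_order all_algebra.
From mathcomp Require Import all_classical all_reals all_analysis.
Set Implicit Arguments. Unset Strict Implicit. Unset Printing Implicit Defensive.
Import Order.TTheory GRing.Theory Num.Theory numFieldNormedType.Exports.
Local Open Scope ring_scope.

(* infinite 0-1 words: w : nat -> bool, true = 1 *)

Definition ones (w : nat -> bool) (l : nat) : nat := \sum_(i < l) (w i : nat).

Definition shiftw (w : nat -> bool) (k : nat) : nat -> bool := fun n => w (k + n).

(* The term of Phi_R at position n: if w_n = 1 and n = d_i (so i = ones w n,
   the number of 1's strictly before n), the term is 2^{d_i}/3^{i+1};
   otherwise 0.  Thus sum_n phi_term w n = sum_i 2^{d_i}/3^{i+1}. *)
Definition phi_term {R : realType} (w : nat -> bool) (n : nat) : R :=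
  if w n then 2 ^+ n / 3 ^+ (ones w n).+1 else 0.

Definition phi_exists {R : realType} (w : nat -> bool) : Prop :=
  cvgn (series (@phi_term R w)).

Definition PhiR {R : realType} (w : nat -> bool) : R :=
  - limn (series (@phi_term R w)).

Definition eventually_periodic (w : nat -> bool) : Prop :=
  exists p N : nat, (0 < p)%N /\ forall n, (N <= n)%N -> w (n + p) = w n.

Definition aperiodic (w : nat -> bool) : Prop := ~ eventually_periodic w.

(* Main.v *)
Require Import Defs.
From mathcomp Require Import all_boot all_order all_algebra.
From mathcomp Require Import all_classical all_reals all_analysis.
From mathcomp Require Import ring lra zify.
Import Order.TTheory GRing.Theory Num.Theory numFieldNormedType.Exports.
Local Open Scope ring_scope.
Local Open Scope classical_set_scope.


Section NT.
Variable R : realType.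

Definition Bm (b : bool) (y : R) : R := if b then (2 * y - 1) / 3 else 2 * y.

Definition Z2 (y : R) : Prop :=
  exists p q : int, odd (absz q) /\ y * q%:~R = p%:~R.

Lemma Z2_B b (y : R) : Z2 y -> Z2 (Bm b y).
Proof.
case=> p [q [oq e]]; case: b => /=.
- exists (2 * p - q), (3 * q); split.
    by rewrite abszM oddM oq.
  rewrite !(intrM, intrB) -e. have h3 : (3%:~R : R) = 3 by []. have h2 : (2%:~R : R) = 2 by []. rewrite h3 h2. by field.
- exists (2 * p); exists q; split => //.
  by rewrite intrM -e mulrA.
Qed.

Lemma B_excl {y : R} {p1 q1 p2 q2 : int} : odd (absz q1) -> odd (absz q2) ->
  y * q1%:~R = (2 * p1)%:~R -> y * q2%:~R = (2 * p2 - q2)%:~R -> False.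
Proof.
move=> o1 o2 e1 e2.
have : ((2 * p1) * q2)%:~R = ((2 * p2 - q2) * q1)%:~R :> R.
  move: e1 e2; rewrite !(intrM, intrB) => e1 e2. rewrite -e1 -e2; ring.
move/intr_inj => E.
have E2 : 2 * (p1 * q2 - p2 * q1) = - (q2 * q1) by lia.
move: (congr1 (fun z : int => odd (absz z)) E2) => /=.
by rewrite abszN !abszM !oddM o1 o2.
Qed.

Lemma B_digit b {y : R} : Z2 y ->
  (if b then exists p q : int, odd (absz q) /\ Bm b y * q%:~R = (2 * p - q)%:~R
   else exists p q : int, odd (absz q) /\ Bm b y * q%:~R = (2 * p)%:~R).
Proof.
case=> p [q [oq e]]; case: b => /=.
- exists (p + q), (3 * q); split; first by rewrite abszM oddM oq.
  rewrite !(intrM, intrB, intrD) -e. by field.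
- exists p, q; split => //. by rewrite intrM -e mulrA.
Qed.

Lemma B_det b1 b2 (y1 y2 : R) : Z2 y1 -> Z2 y2 -> Bm b1 y1 = Bm b2 y2 ->
  b1 = b2 /\ y1 = y2.
Proof.
move=> z1 z2 e.
have d1 := B_digit b1 z1; have d2 := B_digit b2 z2.
have eb : b1 = b2.
  move: d1 d2 e; case: b1; case: b2 => //=.
  - move=> [p1 [q1 [h1 e1]]] [p2 [q2 [h2 e2]]] e.
    by rewrite -e in e2; case: (B_excl h2 h1 e2 e1).
  - move=> [p1 [q1 [h1 e1]]] [p2 [q2 [h2 e2]]] e.
    by rewrite e in e1; case: (B_excl h1 h2 e1 e2).
split => //; subst b2; clear d1 d2; move: e; case: b1 => /= e.
  have e' : 2 * y1 - 1 = 2 * y2 - 1.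
    by rewrite -[LHS](@divfK _ 3) // -[RHS](@divfK _ 3) // e.
  lra.
lra.
Qed.

End NT.

Arguments Bm {R} b y. Arguments Z2 {R} y.


Section Per.
Variable R : realType.
Variables (x : nat -> R) (v : nat -> bool).
Hypothesis rec : forall k, x k = Bm (v k) (x k.+1).

Lemma comp k m : exists a c : nat, x k * 3 ^+ a + c%:R = 2 ^+ m * x (k + m)%N.
Proof.
elim: m => [|m [a [c e]]].
  by exists 0%N, 0%N; rewrite addn0 expr0 mulr1 mul1r addr0.
have := rec (k + m)%N; rewrite addnS.
case: (v (k + m)%N) => /= ex.
- exists a.+1, (3 * c + 2 ^ m)%N.
  rewrite exprS natrD natrM natrX.
  have e3 : x k * (3 * 3 ^+ a) + (3%:R * c%:R + 2%:R ^+ m) =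
     3 * (x k * 3 ^+ a + c%:R) + 2 ^+ m by rewrite /=; ring.
  rewrite e3 e ex exprS; by field.
- exists a, c; rewrite e ex exprS; ring.
Qed.

Lemma Z2_back k n : Z2 (x (k + n)%N) -> Z2 (x k).
Proof.
elim: n k => [|n IH] k; first by rewrite addn0.
rewrite addnS -addSn => /IH; rewrite (rec k); exact: Z2_B.
Qed.

Lemma Z2_rep y : (forall N, exists j, (N <= j)%N /\ x j = y) -> Z2 y.
Proof.
move=> inf; have [k [_ xk]] := inf 0%N.
have [j [kj xj]] := inf k.+1.
have [a [c e]] := comp k (j - k)%N.
rewrite subnKC in e; last by lia.
rewrite xk xj in e.
have m1 : (0 < j - k)%N by lia.
have ev : ~~ odd (2 ^ (j - k)) by rewrite oddX /= negb_or andbT -lt0n m1.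
have od : odd (3 ^ a) by rewrite oddX orbT.
have e' : y * (3 ^ a)%:R + c%:R = (2 ^ (j - k))%:R * y by rewrite !natrX.
clear e; move: e' ev od; generalize (2 ^ (j - k))%N (3 ^ a)%N => A B e ev od.
case: (leqP A B) => h.
- exists (- (c%:Z)), (B - A)%N; split.
    by rewrite absz_nat oddB // od (negbTE ev).
  rewrite intrN -!pmulrn natrB //.
  rewrite mulrBr [y * A%:R]mulrC -e; ring.
- have h' : (B <= A)%N by apply: ltnW.
  exists (c%:Z), (A - B)%N; split.
    by rewrite absz_nat (oddB h') od (negbTE ev).
  rewrite -!pmulrn (natrB _ h').
  rewrite mulrBr [y * A%:R]mulrC -e; ring.
Qed.

Lemma periodic_of_rep y : (forall N, exists j, (N <= j)%N /\ x j = y) ->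
  eventually_periodic v.
Proof.
move=> inf; have zy := Z2_rep y inf.
have zall : forall k, Z2 (x k).
  move=> k; have [j [kj xj]] := inf k.
  apply: (@Z2_back k (j - k)); rewrite subnKC // xj //.
have [k [_ xk]] := inf 0%N.
have [j [kj xj]] := inf k.+1.
have step : forall n, x (k + n)%N = x (j + n)%N /\ v (k + n)%N = v (j + n)%N.
  elim=> [|n [IH _]].
    rewrite !addn0 xk xj; split => //.
    have := xj; rewrite -xk rec [X in _ = X -> _]rec => /B_det.
    by case/(_ (zall _) (zall _)).
  have := IH; rewrite rec [X in _ = X -> _]rec => /B_det.
  case/(_ (zall _) (zall _)) => _; rewrite -!addnS => e; split => //.
  have := e; rewrite rec [X in _ = X -> _]rec => /B_det.
  by case/(_ (zall _) (zall _)).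
exists (j - k)%N, k; split; first by lia.
move=> n kn.
change (v (n + (j - k))%N = v n). have -> : (n + (j - k) = j + (n - k))%N by lia.
have -> : n = (k + (n - k))%N by lia.
by rewrite (step _).2; congr v; lia.
Qed.

End Per.


Section An.
Variable R : realType.

Lemma ones_split w k n : ones w (k + n) = (ones w k + ones (shiftw w k) n)%N.
Proof.
rewrite /ones big_split_ord /=; congr addn.
Qed.

Lemma shiftwE w k n : shiftw w k n = w (k + n)%N.
Proof. by []. Qed.

Lemma ones1 w : ones w 1 = w 0%N.
Proof. by rewrite /ones big_ord1. Qed.

Lemma ones0 w : ones w 0 = 0%N.
Proof. by rewrite /ones big_ord0. Qed.

Lemma phi_termS w n : @phi_term R w n.+1 =
  (if w 0%N then 2 / 3 else 2) * @phi_term R (shiftw w 1) n.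
Proof.
rewrite /phi_term shiftwE add1n.
have -> : ones w n.+1 = (w 0%N + ones (shiftw w 1) n)%N
  by rewrite -add1n ones_split ones1.
case: (w n.+1); last by rewrite mulr0.
case: (w 0%N) => /=; rewrite ?add1n ?add0n !exprS; by field.
Qed.

Lemma series_shift w n : series (@phi_term R w) n.+1 =
  @phi_term R w 0 + (if w 0%N then 2 / 3 else 2) * series (@phi_term R (shiftw w 1)) n.
Proof.
elim: n => [|n IH].
  by rewrite seriesS /series /= !big_geq // addr0 mulr0 addr0.
by rewrite seriesSr IH seriesSr phi_termS mulrDr addrA.
Qed.

Lemma Phi_shift w : phi_exists (R := R) (shiftw w 1) ->
  phi_exists (R := R) w /\ PhiR (R := R) w = Bm (w 0%N) (PhiR (R := R) (shiftw w 1)).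
Proof.
move=> hc.
set lt := limn (series (@phi_term R (shiftw w 1))).
have ht : series (@phi_term R (shiftw w 1)) @ \oo --> lt by exact: hc.
set L := @phi_term R w 0 + (if w 0%N then 2 / 3 else 2) * lt.
have hs : series (@phi_term R w) @ \oo --> L.
  rewrite -cvg_shiftS.
  have -> : [sequence series (@phi_term R w) n.+1]_n =
     (fun n => @phi_term R w 0 + (if w 0%N then 2 / 3 else 2) *
        series (@phi_term R (shiftw w 1)) n).
    by apply/funext => n /=; rewrite series_shift.
  apply: cvgD; first exact: cvg_cst.
  exact: cvgMr.
split; first by apply/cvg_ex; exists L.
rewrite /PhiR (cvg_lim (@Rhausdorff R) hs) -/lt /L /phi_term /ones big_ord0.
have e0 : (2:R) ^+ (0%R : nat) = 1 by []. have e1 : (3:R) ^+ (0%R : nat).+1 = 3 by rewrite expr1.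
case: (w 0%N) => /=; rewrite ?e0 ?e1; by field.
Qed.

End An.


Section Bd.
Variable R : realType.

Lemma ln3_gt0 : 0 < ln (3 : R).
Proof. by apply: ln_gt0; lra. Qed.

Lemma exp_ln3 (m : nat) : (3 : R) ^+ m = expR (m%:R * ln 3).
Proof. by rewrite expRM_natl lnK // posrE; lra. Qed.

Lemma q_lt1 (r : R) : ln 2 / ln 3 < r -> 2 / expR (r * ln 3) < 1.
Proof.
move=> hr; have h3 := ln3_gt0.
rewrite ltr_pdivrMr ?expR_gt0 // mul1r.
have -> : (2 : R) = expR (ln 2) by rewrite lnK // posrE; lra.
rewrite ltr_expR -ltr_pdivrMr //.
Qed.

Lemma term_bound w (r C : R) : ln 2 / ln 3 < r ->
  (forall n, r * n%:R - C <= (ones w n)%:R) ->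
  forall n, 0 <= @phi_term R w n <= expR (C * ln 3) * (2 / expR (r * ln 3)) ^+ n.
Proof.
move=> hr hC n; have h3 := ln3_gt0.
rewrite /phi_term; case: (w n); last first.
  by rewrite lexx /= mulr_ge0 ?expR_ge0 // exprn_ge0 // divr_ge0 ?expR_ge0.
apply/andP; split; first by rewrite divr_ge0 // exprn_ge0.
set m := ones w n.
set K := expR (C * ln 3); set E := expR (r * ln 3).
have key : E ^+ n <= K * 3 ^+ m.+1.
  have h1 : E ^+ n = expR (n%:R * (r * ln 3)) by rewrite expRM_natl.
  have h2 : K * 3 ^+ m.+1 = 3 * expR (C * ln 3 + m%:R * ln 3) by rewrite exprS exp_ln3 expRD /K; ring.
  rewrite h1 h2.
  have : expR (n%:R * (r * ln 3)) <= expR (C * ln 3 + m%:R * ln 3).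
    rewrite ler_expR.
    have := hC n; rewrite -/m => hm.
    have : (r * n%:R - C) * ln 3 <= m%:R * ln 3 by apply: ler_wpM2r => //; exact: ltW.
    lra.
  move=> h; apply: (le_trans h).
  rewrite ler_peMl ?expR_ge0 //; lra.
rewrite expr_div_n mulrCA ler_wpM2l ?exprn_ge0 //.
have E0 : 0 < E ^+ n by rewrite exprn_gt0 // expR_gt0.
rewrite ler_pdivlMr // mulrC ler_pdivrMr ?exprn_gt0 //.
Qed.

Lemma series_bound (a : nat -> R) (K q : R) : 0 <= q -> q < 1 ->
  (forall n, 0 <= a n <= K * q ^+ n) ->
  cvgn (series a) /\ 0 <= limn (series a) <= K / (1 - q).
Proof.
move=> q0 q1 ha.
have K0 : 0 <= K by have /andP[h1 h2] := ha 0%N; move: h2; rewrite expr0 mulr1; exact: le_trans.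
have q1' : 0 < 1 - q by lra.
have part : forall n, series a n <= K * (1 - q ^+ n) / (1 - q).
  elim=> [|n IH].
    by rewrite /series /= big_geq // expr0 subrr mulr0 mul0r.
  rewrite seriesSr.
  have /andP[_ hn] := ha n.
  have -> : K * (1 - q ^+ n.+1) / (1 - q) = K * (1 - q ^+ n) / (1 - q) + K * q ^+ n.
    rewrite exprS; field; lra.
  exact: lerD.
have ub : forall n, series a n <= K / (1 - q).
  move=> n; apply: (le_trans (part n)); apply: ler_wpM2r; first by rewrite invr_ge0 ltW.
  have : 0 <= q ^+ n by rewrite exprn_ge0.
  nra.
have nd : nondecreasing_seq (series a).
  apply/nondecreasing_seqP => n; rewrite seriesSr lerDl.
  by have /andP[] := ha n.
have lb : forall n, 0 <= series a n.
  elim=> [|n IH]; first by rewrite /series /= big_geq.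
  rewrite seriesSr; apply: addr_ge0 => //; by have /andP[] := ha n.
have cv : cvgn (series a).
  by apply: nondecreasing_is_cvgn => //; exists (K / (1 - q)) => _ [n _ <-].
split => //; apply/andP; split.
  by apply: limr_ge => //; apply: nearW.
by apply: limr_le => //; apply: nearW.
Qed.

Lemma phi_bound w (r C : R) : ln 2 / ln 3 < r ->
  (forall n, r * n%:R - C <= (ones w n)%:R) ->
  phi_exists (R := R) w /\ 0 <= limn (series (@phi_term R w)) <=
     expR (C * ln 3) / (1 - 2 / expR (r * ln 3)).
Proof.
move=> hr hC.
have [] := @series_bound (@phi_term R w) (expR (C * ln 3)) (2 / expR (r * ln 3)).
- by rewrite divr_ge0 ?expR_ge0.
- exact: q_lt1.
- exact: term_bound.
by move=> h1 h2; split.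
Qed.

End Bd.


Section Li.
Variable R : realType.

Lemma liminf_ext (u : nat -> \bar R) (c : R) : (c%:E < limn_einf u)%E ->
  exists r' : R, c < r' /\ exists n0, forall k, (n0 <= k)%N -> (r'%:E <= u k)%E.
Proof.
rewrite limn_einf_lim (cvg_lim (@ereal_hausdorff R) (@cvg_einfs_sup R u)).
move=> /ereal_sup_gt [_ [n _ <-] hn].
have lb : forall k, (n <= k)%N -> (einfs u n <= u k)%E.
  by move=> k hk; apply: ereal_inf_lbound; exists k.
move: hn lb; case: (einfs u n) => [x| |] hn lb.
- exists ((c + x) / 2); split; first by move: hn; rewrite lte_fin; lra.
  exists n => k /lb; apply: le_trans; rewrite lee_fin; move: hn; rewrite lte_fin; lra.
- exists (c + 1); split; first lra.
  by exists n => k /lb; apply: le_trans; rewrite leey.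
- by move: hn; rewrite ltNge leNye.
Qed.

End Li.


Lemma good_ind (R : realType) (g : nat -> R) : forall n k,
  (forall m, (k + n <= m)%N -> g k <= g m) ->
  exists k', (k <= k')%N /\ forall m, (k' <= m)%N -> g k' <= g m.
Proof.
elim=> [|n IH] k h.
  by exists k; split => // m km; apply: h; rewrite addn0.
case: (pselect (forall m, (k <= m)%N -> g k <= g m)) => [H|].
  by exists k.
move=> /existsNP [m /not_implyP [km /negP]]; rewrite -ltNge => gm.
have km' : (k < m)%N.
  by rewrite ltn_neqAle km andbT; apply/eqP => e; move: gm; rewrite e ltxx.
have [k' [mk' gk']] : exists k', (m <= k')%N /\ forall m', (k' <= m')%N -> g k' <= g m'.
  apply: (IH m) => m' hm'; apply: (le_trans (ltW gm)); apply: h; lia.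
by exists k'; split => //; apply: leq_trans (ltnW km') mk'.
Qed.

Theorem lemma26 (R : realType) (v : nat -> bool) :
  aperiodic v ->
  ((ln (2 : R) / ln 3)%:E <
     limn_einf (fun l : nat => ((ones v l)%:R / l%:R : R)%:E))%E ->
  (forall k : nat, phi_exists (R := R) (shiftw v k)) /\
  let S := [set x : R | exists k : nat, x = PhiR (shiftw v k)] in
  infinite_set S /\ exists x : R, limit_point S x.
Proof.
move=> ap hlim.
have [r' [cr' [n0 hn0]]] := @liminf_ext R _ _ hlim.
set c := ln (2:R) / ln 3 in cr'.
have hc0 : 0 < c.
  rewrite /c divr_gt0 // ?ln3_gt0 //. apply: ln_gt0; lra.
set r := (c + r') / 2.
have cr : c < r by rewrite /r; lra.
have rr' : r < r' by rewrite /r; lra.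
have r0 : 0 < r by lra.
set g := fun l : nat => (ones v l)%:R - r * l%:R.
have glin : forall l, (n0 <= l)%N -> (r' - r) * l%:R <= g l.
  move=> l hl; have := hn0 l hl; rewrite lee_fin /g.
  case: l hl => [|l] hl.
    by rewrite /ones big_ord0 !mulr0 subr0.
  rewrite ler_pdivlMr ?ltr0Sn // => h; nra.
have ginf : forall k0, exists M, (k0 <= M)%N /\ forall m, (M <= m)%N -> g k0 <= g m.
  move=> k0; set T := Num.truncn (g k0 / (r' - r)).
  exists (maxn (maxn n0 k0) T.+1); split; first by lia.
  move=> m hm.
  have h1 : g k0 / (r' - r) < T.+1%:R := truncnS_gt _.
  have h2 : g k0 < (r' - r) * T.+1%:R.
    by rewrite mulrC -ltr_pdivrMr //; lra.
  have h3 : T.+1%:R <= m%:R :> R by rewrite ler_nat; lia.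
  have h4 := glin m ltac:(lia).
  have h5 : (r' - r) * T.+1%:R <= (r' - r) * m%:R by apply: ler_wpM2l => //; lra.
  lra.
have good : forall k0, exists k, (k0 <= k)%N /\ forall m, (k <= m)%N -> g k <= g m.
  move=> k0; have [M [hM hg]] := ginf k0.
  have [k' [h1 h2]] := @good_ind R g (M - k0) k0 (fun m hm => hg m ltac:(lia)).
  by exists k'.
have [k1 [_ gk1]] := good 0%N.
set Lb := Num.min (g k1) (- (r * k1%:R)).
have glb : forall m, Lb <= g m.
  move=> m; case: (leqP k1 m) => h.
  - by apply: le_trans (gk1 m h); rewrite /Lb ge_min lexx.
  - apply: le_trans (_ : - (r * k1%:R) <= g m); first by rewrite /Lb ge_min lexx orbT.
    have : m%:R <= k1%:R :> R by rewrite ler_nat; lia.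
    have : 0 <= (ones v m)%:R :> R by [].
    rewrite /g; nra.
have sb : forall k n, r * n%:R - (g k - Lb) <= (ones (shiftw v k) n)%:R.
  move=> k n; have := glb (k + n)%N; rewrite /g ones_split !natrD mulrDr; lra.
have sbg : forall k, (forall m, (k <= m)%N -> g k <= g m) ->
    forall n, r * n%:R - 0 <= (ones (shiftw v k) n)%:R.
  move=> k hk n; have := hk (k + n)%N (leq_addr _ _).
  rewrite /g ones_split !natrD mulrDr; lra.
have ex : forall k, phi_exists (R := R) (shiftw v k) := fun k => (@phi_bound R _ _ _ cr (sb k)).1.
split => //.
set x := fun k => PhiR (R := R) (shiftw v k).
have rec : forall k, x k = Bm (v k) (x k.+1).
  move=> k.
  have sh : shiftw (shiftw v k) 1 = shiftw v k.+1.
    by apply/funext => n; rewrite !shiftwE add1n addnS.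
  have := (@Phi_shift R (shiftw v k)); rewrite sh => /(_ (ex k.+1)) [_].
  by rewrite shiftwE addn0.
move=> S.
have /choice [kk hkk] : forall n, exists k, (n <= k)%N /\
   forall m, (k <= m)%N -> g k <= g m by exact: good.
set u := fun n => x (kk n).
have uS : range u `<=` S by move=> _ [n _ <-]; exists (kk n).
set B := expR (0 * ln 3) / (1 - 2 / expR (r * ln (3 : R))).
have ub : forall n, `|u n| <= B.
  move=> n; have [_ /andP[h1 h2]] := @phi_bound R _ _ _ cr (sbg (kk n) (hkk n).2).
  by rewrite /u /x /PhiR normrN ger0_norm.
have [fin|inf] := pselect (finite_set (range u)).
  exfalso; apply: ap.
  have [y [A Ainf HA]] := finite_range_cst_subsequence fin.
  apply: (@periodic_of_rep R x v rec y) => N.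
  have [n [An nN]] : exists n, A n /\ (N <= n)%N.
    case: (pselect (exists n, A n /\ (N <= n)%N)) => [//|H]; exfalso; apply: Ainf.
    apply: (sub_finite_set _ (finite_II N)) => n An /=.
    case: (ltnP n N) => // h; case: H; by exists n.
  exists (kk n); split; first by apply: leq_trans nN (hkk n).1.
  exact: (HA n).1.
have bnd : bounded_set (range u).
  exists B; split; first exact: num_real.
  move=> M hM _ [n _ <-]; apply: le_trans (ub n) _; exact: ltW.
have [l hl] := infinite_bounded_limit_point_nonempty inf bnd.
split; first exact: sub_infinite_set uS inf.
exists l => U hU; have [y [y1 y2 y3]] := hl U hU.
by exists y; split => //; exact: uS.
Qed.
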